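(* Let $\Gamma^i_k$ and $\Gamma^j_k$ be invertible (positive definite) covariance matrices and $\omega\in[0,1]$. The division of Gaussian densities \[ \frac{\mathcal{N}(\mathbf{x}_k; \hat{\mathbf{x}}^{i}_k, \Gamma^{i}_k)\, \mathcal{N}(\mathbf{x}_k; \hat{\mathbf{x}}^{j}_k, \Gamma^{j}_k)}{\mathcal{N}(\mathbf{x}_k; \hat{\mathbf{x}}^{eq}_k, \Gamma^{eq}_k)} \propto \mathcal{N}(\mathbf{x}_k; \hat{\mathbf{x}}^f_k, \Gamma^f_k), \] where $(\hat{\mathbf{x}}^{eq}_k,\Gamma^{eq}_k)$ is the moment-matched Gaussian approximation of the mixture $\omega\,\mathcal{N}(\hat{\mathbf{x}}^i_k,\Gamma^i_k)+(1-\omega)\,\mathcal{N}(\hat{\mathbf{x}}^j_k,\Gamma^j_k)$, is always valid; that is, $\Gamma^{eq}_k - \left({\Gamma^{i}_k}^{-1} + {\Gamma^{j}_k}^{-1}\right)^{-1} \succ \mathbf{0}$, so that $\Gamma^f_k = \left({\Gamma^{i}_k}^{-1} + {\Gamma^{j}_k}^{-1} - {\Gamma^{eq}_k}^{-1}\right)^{-1}$ is a valid covariance.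
   Context: Harmonic mean density (HMD) fusion of two local Gaussian track densities $p(\mathbf{x}_k|\mathbf{z}^i_k)=\mathcal{N}(\mathbf{x}_k;\hat{\mathbf{x}}^i_k,\Gamma^i_k)$ and $p(\mathbf{x}_k|\mathbf{z}^j_k)=\mathcal{N}(\mathbf{x}_k;\hat{\mathbf{x}}^j_k,\Gamma^j_k)$: the fused density is their product divided by the weighted mixture of the two, and the denominator mixture is approximated by a single Gaussian with mean $\hat{\mathbf{x}}^{eq}_k=\omega\hat{\mathbf{x}}^i_k+(1-\omega)\hat{\mathbf{x}}^j_k$ and covariance $\Gamma^{eq}_k=\omega[\Gamma^i_k+(\hat{\mathbf{x}}^{eq}_k-\hat{\mathbf{x}}^i_k)(\hat{\mathbf{x}}^{eq}_k-\hat{\mathbf{x}}^i_k)^T]+(1-\omega)[\Gamma^j_k+(\hat{\mathbf{x}}^{eq}_k-\hat{\mathbf{x}}^j_k)(\hat{\mathbf{x}}^{eq}_k-\hat{\mathbf{x}}^j_k)^T]$. The fused mean is $\hat{\mathbf{x}}^f_k=\Gamma^f_k[{\Gamma^i_k}^{-1}\hat{\mathbf{x}}^i_k+{\Gamma^j_k}^{-1}\hat{\mathbf{x}}^j_k-{\Gamma^{eq}_k}^{-1}\hat{\mathbf{x}}^{eq}_k]$. Division of a Gaussian (here the product density with covariance $\Gamma^{num}_k=({\Gamma^i_k}^{-1}+{\Gamma^j_k}^{-1})^{-1}$) by another Gaussian yields a valid Gaussian only if the divisor's covariance dominates, $\Gamma^{eq}_k \succeq \Gamma^{num}_k$. *)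

(* Defs.v *)
From mathcomp Require Import all_boot all_order all_algebra.
Set Implicit Arguments. Unset Strict Implicit. Unset Printing Implicit Defensive.
Import Order.TTheory GRing.Theory Num.Theory.
Local Open Scope ring_scope.

Definition posdef (R : realFieldType) (n : nat) (A : 'M[R]_n) : Prop :=
  A^T = A /\ forall x : 'cV[R]_n, x != 0 -> 0 < (x^T *m A *m x) 0 0.

(* Moment-matched mean of w N(xi,Gi) + (1-w) N(xj,Gj). *)
Definition xeq (R : realFieldType) (n : nat) (w : R) (xi xj : 'cV[R]_n) : 'cV[R]_n :=
  w *: xi + (1 - w) *: xj.

Definition Geq (R : realFieldType) (n : nat) (w : R) (xi xj : 'cV[R]_n)
    (Gi Gj : 'M[R]_n) : 'M[R]_n :=
  let xe := xeq w xi xj in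
  w *: (Gi + (xe - xi) *m (xe - xi)^T) + (1 - w) *: (Gj + (xe - xj) *m (xe - xj)^T).

(* Covariance of the (normalized) product density. *)
Definition Gnum (R : realFieldType) (n : nat) (Gi Gj : 'M[R]_n) : 'M[R]_n :=
  invmx (invmx Gi + invmx Gj).

Definition Gf (R : realFieldType) (n : nat) (w : R) (xi xj : 'cV[R]_n)
    (Gi Gj : 'M[R]_n) : 'M[R]_n :=
  invmx (invmx Gi + invmx Gj - invmx (Geq w xi xj Gi Gj)).

(* Main.v *)
Require Import Defs.
From mathcomp Require Import all_boot all_order all_algebra.
From mathcomp Require Import ring lra.
Import Order.TTheory GRing.Theory Num.Theory.
Local Open Scope ring_scope.
Set Implicit Arguments. Unset Strict Implicit.

Section Aux.
Variables (R : realFieldType) (n : nat).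
Implicit Types (A B : 'M[R]_n) (u v x y z : 'cV[R]_n).

Definition dot u v : R := (u^T *m v) 0 0.

Lemma dotE u v : dot u v = \sum_i u i 0 * v i 0.
Proof. by rewrite /dot mxE; apply: eq_bigr => i _; rewrite mxE. Qed.

Lemma dotC u v : dot u v = dot v u.
Proof. by rewrite !dotE; apply: eq_bigr => i _; rewrite mulrC. Qed.

Lemma dotDr u v z : dot u (v + z) = dot u v + dot u z.
Proof. by rewrite !dotE -big_split; apply: eq_bigr => i _; rewrite !mxE mulrDr. Qed.

Lemma dotBr u v z : dot u (v - z) = dot u v - dot u z.
Proof.
rewrite !dotE -sumrB; apply: eq_bigr => i _; rewrite !mxE; ring.
Qed.

Lemma dotZr a u v : dot u (a *: v) = a * dot u v.
Proof. rewrite !dotE mulr_sumr; apply: eq_bigr => i _; rewrite !mxE; ring. Qed.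

Lemma dotDl u v z : dot (u + v) z = dot u z + dot v z.
Proof. by rewrite dotC dotDr !(dotC z). Qed.

Lemma dotBl u v z : dot (u - v) z = dot u z - dot v z.
Proof. by rewrite dotC dotBr !(dotC z). Qed.

Lemma dot0r u : dot u 0 = 0.
Proof. by rewrite dotE big1 // => i _; rewrite mxE mulr0. Qed.

Lemma dot_tr u A v : dot u (A *m v) = dot (A^T *m u) v.
Proof. by rewrite /dot trmx_mul trmxK mulmxA. Qed.

Lemma dot_sym u A v : A^T = A -> dot u (A *m v) = dot (A *m u) v.
Proof. by move=> sA; rewrite dot_tr sA. Qed.

Lemma dot_outer x c : dot x ((c *m c^T) *m x) = dot x c ^+ 2.
Proof.
rewrite /dot -mulmxA mulmxA mxE big_ord1 expr2.
by rewrite -/(dot x c) -/(dot c x) (dotC c x).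
Qed.

Definition pd A := A^T = A /\ forall x, x != 0 -> 0 < dot x (A *m x).

Lemma pdE A : posdef A <-> pd A.
Proof.
rewrite /posdef /pd /dot.
by split=> -[s h]; split=> // x /h; rewrite mulmxA.
Qed.

Lemma pd_unit A : pd A -> A \in unitmx.
Proof.
move=> [sA pA]; rewrite unitmxE unitfE; apply/negP => /det0P [v v0 vA].
have : v^T != 0.
  by apply/eqP => h; move/eqP: v0; apply; rewrite -(trmxK v) h trmx0.
move=> /pA; rewrite /dot trmxK mulmxA vA mul0mx mxE ltxx //.
Qed.

Lemma unit_nz A x : A \in unitmx -> x != 0 -> A *m x != 0.
Proof.
move=> uA x0; apply/eqP => h; move/eqP: x0; apply.
by rewrite -(mulKmx uA x) h mulmx0.
Qed.

Lemma pd_ge0 A x : pd A -> 0 <= dot x (A *m x).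
Proof.
move=> [_ pA]; have [->|x0] := eqVneq x 0; first by rewrite mulmx0 dot0r.
exact/ltW/pA.
Qed.

Lemma pd_inv A : pd A -> pd (invmx A).
Proof.
move=> pA; have uA := pd_unit pA; case: pA => sA pA.
split; first by rewrite trmx_inv sA.
move=> x x0; have y0 : invmx A *m x != 0 by apply: unit_nz => //; rewrite unitmx_inv.
have := pA _ y0; rewrite mulKVmx // dotC //.
Qed.

Lemma pd_add A B : pd A -> pd B -> pd (A + B).
Proof.
move=> [sA pA] [sB pB]; split; first by rewrite linearD /= sA sB.
by move=> x x0; rewrite mulmxDl dotDr addr_gt0 ?pA ?pB.
Qed.

Lemma pd_sub_add A B : pd (A - B) -> pd B -> pd A.
Proof. by move=> h1 h2; have := pd_add h1 h2; rewrite subrK. Qed.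

Lemma key1 A B x : pd A -> pd B -> x != 0 ->
  dot x (invmx (invmx A + invmx B) *m x) < dot x (A *m x).
Proof.
move=> pA pB x0.
have pS := pd_add (pd_inv pA) (pd_inv pB).
set S := invmx A + invmx B in pS *.
have uS := pd_unit pS; have uA := pd_unit pA; have uB := pd_unit pB.
pose y := invmx S *m x.
have hxy : x = S *m y by rewrite mulKVmx.
have y0 : y != 0 by apply: unit_nz => //; rewrite unitmx_inv.
rewrite -/y; clearbody y; subst x.
have hAu : A *m (invmx A *m y) = y by rewrite mulKVmx.
have hBv : B *m (invmx B *m y) = y by rewrite mulKVmx.
have v0 : invmx B *m y != 0 by apply: unit_nz => //; rewrite unitmx_inv.
move: hAu hBv v0; rewrite /S mulmxDl.
move: (invmx A *m y) (invmx B *m y) => u v hAu hBv v0.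
rewrite mulmxDr hAu !dotDl !dotDr.
have e1 : dot u (A *m v) = dot v y by rewrite dot_sym; [rewrite hAu dotC | case: pA].
have e2 : 0 < dot v (B *m v) by case: pB => _; apply.
have e3 : 0 < dot v (A *m v) by case: pA => _; apply.
rewrite hBv in e2.
rewrite e1; lra.
Qed.

Lemma key2 A B : pd A -> pd B -> pd (A - B) -> pd (invmx B - invmx A).
Proof.
move=> pA pB pAB.
have uA := pd_unit pA; have uB := pd_unit pB.
split.
  by rewrite linearB /= !trmx_inv (proj1 pA) (proj1 pB).
move=> x x0.
pose y := invmx A *m x.
have hxy : A *m y = x by rewrite mulKVmx.
have y0 : y != 0 by apply: unit_nz => //; rewrite unitmx_inv.
have e0 := pd_ge0 (y - invmx B *m x) pB.
rewrite mulmxBr mulKVmx // !dotBl !dotBr in e0.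
have e1 : dot (invmx B *m x) (B *m y) = dot x y.
  by rewrite dot_tr (proj1 pB) mulKVmx // dotC.
have e2 := (proj2 pAB) y y0.
rewrite mulmxBl dotBr in e2.
rewrite -hxy in e2 *; rewrite !hxy in e0 e1 e2 *.
rewrite mulmxBl dotBr -/y.
rewrite (dotC y x) in e0 e2.
rewrite (dotC (invmx B *m x) x) in e0.
lra.
Qed.

Lemma symD A B : A^T = A -> B^T = B -> (A+B)^T = A+B.
Proof. by move=> a b; rewrite linearD /= a b. Qed.
Lemma symB A B : A^T = A -> B^T = B -> (A-B)^T = A-B.
Proof. by move=> a b; rewrite linearB /= a b. Qed.
Lemma symZ c A : A^T = A -> (c *: A)^T = c *: A.
Proof. by move=> a; rewrite linearZ /= a. Qed.
Lemma sym_outer (c : 'cV[R]_n) : (c *m c^T)^T = c *m c^T.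
Proof. by rewrite trmx_mul trmxK. Qed.

End Aux.

Theorem proposition2 (R : realFieldType) (n : nat) (w : R)
    (xi xj : 'cV[R]_n) (Gi Gj : 'M[R]_n) :
  posdef Gi -> posdef Gj -> 0 <= w -> w <= 1 ->
  posdef (Geq w xi xj Gi Gj - Gnum Gi Gj) /\ posdef (Gf w xi xj Gi Gj).
Proof.
move=> /pdE pGi /pdE pGj w0 w1.
have pN : pd (Gnum Gi Gj) := pd_inv (pd_add (pd_inv pGi) (pd_inv pGj)).
have pE : pd (Geq w xi xj Gi Gj - Gnum Gi Gj).
  split.
    rewrite /Geq /Gnum /=.
    apply: symB; last by case: pN.
    apply: symD; apply: symZ; apply: symD; (try exact: sym_outer);
      by [case: pGi | case: pGj].
  move=> x x0.
  rewrite /Geq /=; move: (xeq w xi xj - xi) (xeq w xi xj - xj) => c1 c2.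
  rewrite /Gnum mulmxBl dotBr mulmxDl dotDr -!scalemxAl !dotZr.
  rewrite !mulmxDl !dotDr !dot_outer.
  have k1 := key1 pGi pGj x0.
  have k2 := key1 pGj pGi x0; rewrite (addrC (invmx Gj)) in k2.
  set c := dot x (invmx (invmx Gi + invmx Gj) *m x) in k1 k2 *.
  set a := dot x (Gi *m x) in k1 *.
  set b := dot x (Gj *m x) in k2 *.
  set p := dot x _ ^+ 2; set q := dot x _ ^+ 2.
  have hp : 0 <= p by apply: sqr_ge0.
  have hq : 0 <= q by apply: sqr_ge0.
  have h1 : 0 <= w * p by apply: mulr_ge0.
  have h2 : 0 <= (1 - w) * q by apply: mulr_ge0; lra.
  have h3 : 0 < w * (a - c) + (1 - w) * (b - c).
    have [->|wp] := eqVneq w 0; first by rewrite mul0r add0r subr0 mul1r; lra.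
    have wp' : 0 < w by rewrite lt0r wp.
    apply: ltr_pwDl; first by apply: mulr_gt0 => //; lra.
    by apply: mulr_ge0; lra.
  have -> : w * (a + p) + (1 - w) * (b + q) - c
     = (w * (a - c) + (1 - w) * (b - c)) + w * p + (1 - w) * q by ring.
  rewrite -addrA; apply: (lt_le_trans h3); rewrite lerDl; exact: addr_ge0.
split; first exact/pdE.
apply/pdE; rewrite /Gf.
apply: pd_inv.
have := key2 (pd_sub_add pE pN) pN pE.
by rewrite /Gnum invmxK.
Qed.
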